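(* For all integers $k\ge4$ and $n\ge1$, $$\chi''_c(G_{k,n})\le k+1+\frac{1}{2n}.$$
   Context: A half-edge has exactly one end vertex. Let $H_k$ be obtained from $K_{k,k}$ by deleting one vertex but keeping its $k$ incident edges as half-edges, and let $H'_k$ be obtained from $H_k$ by deleting $k-2$ of its half-edges. Let $B_1,\ldots,B_n$ be copies of $H'_k$ with half-edges $f_i,f'_i$ in $B_i$, and let $B_0$ be a single vertex $u$ with two half-edges $f_0,f'_{n+1}$. $G_{k,n}$ is obtained from the disjoint union of $B_0,\ldots,B_n$ by joining $f_i$ and $f'_{i+1}$ into an edge for each $0\le i\le n$. For integers $p\ge q\ge1$, a $(p,q)$-total colouring of a graph assigns colours in $\{0,\ldots,p-1\}$ to vertices and edges such that $q\le|c(a)-c(b)|\le p-q$ whenever $a,b$ are adjacent vertices, edges sharing an end, or an incident vertex–edge pair; $\chi''_c(G)=\inf\{p/q\mid G \text{ has a } (p,q)\text{-total colouring}\}$. *)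

(* Defs.v *)
From HB Require Import structures.
From mathcomp Require Import all_boot all_order all_algebra.
From mathcomp Require Import all_classical all_reals.
Set Implicit Arguments. Unset Strict Implicit. Unset Printing Implicit Defensive.
Import Order.TTheory GRing.Theory Num.Theory.

(* Vertices: None = u (the block B_0); Some (i, inl j) = vertex a_{j+1} of
   block B_{i+1} (the side of K_{k,k} that keeps all k vertices);
   Some (i, inr j) = vertex b_{j+1} of block B_{i+1} (the side from which one
   vertex was deleted, so k-1 vertices).  In H'_k the two remaining
   half-edges are at a_1 (half-edge f_i) and a_2 (half-edge f'_i). *)
Definition Gvert (k n : nat) : finType := option ('I_n * ('I_k + 'I_k.-1)).

Definition Gbase (k n : nat) (x y : Gvert k n) : bool :=
  match x, y with
  | None, Some (i, inl j) =>
      (* f_0 joined with f'_1 (at a_2 of B_1); f_n joined with f'_{n+1} (at a_1 of B_n) *)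
      ((nat_of_ord i == 0) && (nat_of_ord j == 1))
      || ((nat_of_ord i == n.-1) && (nat_of_ord j == 0))
  | Some (i, inl j), Some (i', inl j') =>
      (* f_{i+1} (at a_1 of B_{i+1}) joined with f'_{i+2} (at a_2 of B_{i+2}) *)
      [&& nat_of_ord j == 0, nat_of_ord j' == 1 & (nat_of_ord i).+1 == nat_of_ord i']
  | Some (i, inl _), Some (i', inr _) =>
      (* edges of K_{k,k} minus a vertex, inside each block *)
      i == i'
  | _, _ => false
  end.

Definition Gadj (k n : nat) : rel (Gvert k n) :=
  fun x y => Gbase x y || Gbase y x.

Definition far (p q a b : nat) : bool :=
  (q <= maxn a b - minn a b) && (maxn a b - minn a b <= p - q).

Definition total_colouring (V : finType) (adj : rel V) (p q : nat)
    (cv : V -> nat) (ce : V -> V -> nat) : Prop :=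
  [/\ (forall x, cv x < p),
      (forall x y, adj x y -> ce x y < p /\ ce x y = ce y x),
      (forall x y, adj x y -> far p q (cv x) (cv y)),
      (forall x y z, adj x y -> adj x z -> y != z -> far p q (ce x y) (ce x z))
    & (forall x y, adj x y -> far p q (cv x) (ce x y))].

Definition has_pq_total_colouring (V : finType) (adj : rel V) (p q : nat) : Prop :=
  [/\ 1 <= q, q <= p & exists cv ce, total_colouring adj p q cv ce].

Local Open Scope classical_set_scope.
Local Open Scope ring_scope.

Definition circ_total_chi (R : realType) (V : finType) (adj : rel V) : R :=
  inf [set r : R | exists p q : nat,
         has_pq_total_colouring adj p q /\ r = p%:R / q%:R].

(* Main.v *)
Require Import Defs.
From mathcomp Require Import all_boot all_order all_algebra.
From mathcomp Require Import all_classical all_reals.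
From mathcomp Require Import zify ring.
Set Implicit Arguments. Unset Strict Implicit. Unset Printing Implicit Defensive.
Section C.
Variables (k n : nat).
Definition Q := 2 * n.
Definition P := k.+1 * Q + 1.

Lemma farC p q a b : far p q a b = far p q b a.
Proof. by rewrite /far maxnC minnC. Qed.

Lemma far_grid m1 s1 m2 s2 : 1 <= k -> s1 <= Q -> s2 <= Q -> m1 <= m2 ->
  (m1 = m2 -> s1 + Q <= s2) -> (m1.+1 = m2 -> s1 <= s2) -> m2 <= m1 + k ->
  (m2 = m1 + k -> s2 <= s1 + 1) -> far P Q (m1 * Q + s1) (m2 * Q + s2).
Proof.
move=> k1 hs1 hs2 hm e0 e1 hk ek.
have le : m1 * Q + s1 <= m2 * Q + s2.
  case: (ltngtP m1 m2) => h; last by rewrite h; move: (e0 h); lia.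
  - have : m1.+1 * Q <= m2 * Q by apply: leq_mul.
    rewrite mulSn; lia.
  - lia.
rewrite /far (maxn_idPr le) (minn_idPl le).
set d := m2 - m1.
have hd : m2 = m1 + d by rewrite /d; lia.
have -> : m2 * Q + s2 - (m1 * Q + s1) = d * Q + s2 - s1.
  by rewrite hd mulnDl; lia.
rewrite /P.
have hdk : d <= k by lia.
apply/andP; split.
- case: d hd hdk => [|[|d]] hd hdk.
  + rewrite mul0n add0n; move: (e0 ltac:(lia)); lia.
  + rewrite mul1n; move: (e1 ltac:(lia)); lia.
  + rewrite !mulSn; lia.
- case: (ltngtP d k) => h.
  + have : d * Q <= k.-1 * Q by apply: leq_mul => //; lia.
    have : k = k.-1.+1 by lia.
    move=> ->; rewrite /= mulSn mulSn; lia.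
  + lia.
  + rewrite h; move: (ek ltac:(lia)); rewrite mulSn; lia.
Qed.

Lemma far_grid' m1 s1 m2 s2 : 1 <= k -> s1 <= Q -> s2 <= Q -> m2 <= m1 ->
  (m2 = m1 -> s2 + Q <= s1) -> (m2.+1 = m1 -> s2 <= s1) -> m1 <= m2 + k ->
  (m1 = m2 + k -> s1 <= s2 + 1) -> far P Q (m1 * Q + s1) (m2 * Q + s2).
Proof. by move=> *; rewrite farC; apply: far_grid. Qed.

Lemma lt_grid m s : m <= k -> s <= Q -> m * Q + s < P.
Proof.
move=> hm hs; have : m * Q <= k * Q by apply: leq_mul.
rewrite /P mulSn; lia.
Qed.
End C.
Lemma someE (T : eqType) (a b : T) : (Some a == Some b) = (a == b). Proof. by []. Qed.
Lemma inlE (A B : eqType) (a b : A) : (@inl A B a == inl b) = (a == b). Proof. by []. Qed.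
Lemma inrE (A B : eqType) (a b : B) : (@inr A B a == inr b) = (a == b). Proof. by []. Qed.
Lemma inlrE (A B : eqType) (a : A) (b : B) : (inl a == inr b) = false. Proof. by []. Qed.
Lemma inrlE (A B : eqType) (a : A) (b : B) : (inr b == inl a) = false. Proof. by []. Qed.

Definition cls k (j l : nat) := if j <= l.+1 then l.+1 - j else l.+1 + k - j.
Definition shf (j l : nat) := if (j == 0) || (l.+1 < j) then 1 else 0.
Definition Ecol k n (i j l : nat) := cls k j l * Q n + (2 * i + shf j l).
Definition hf k n (i j : nat) := k * Q n + (2 * i + (if j == 0 then 2 else 0)).
Definition cva k n (i j : nat) :=
  (if j == 0 then 0 else k - j) * Q n + (2 * i + (if j == 0 then 1 else 0)).
Definition cvb k n (i : nat) := k * Q n + (2 * i + 1).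
Definition cvu n := 2 * Q n + 0.

Definition cv k n (x : Gvert k n) : nat :=
  match x with
  | None => cvu n
  | Some (i, inl j) => cva k n i j
  | Some (i, inr _) => cvb k n i
  end.

Definition ce k n (x y : Gvert k n) : nat :=
  match x, y with
  | None, Some (i, inl j) => hf k n i j
  | Some (i, inl j), None => hf k n i j
  | Some (i, inl j), Some (_, inl _) => hf k n i j
  | Some (i, inl j), Some (_, inr l) => Ecol k n i j l
  | Some (_, inr l), Some (i, inl j) => Ecol k n i j l
  | _, _ => 0
  end.

Ltac norm_hyps :=
  rewrite ?someE ?xpair_eqE ?inlE ?inrE ?inlrE ?inrlE -?val_eqE /=.

Ltac splitifs := repeat (case: ifPn => ? /=).

Ltac grid := match goal with |- is_true (far _ _ (?m1 * _ + _) (?m2 * _ + _)) =>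
  case: (leqP m1 m2) => ?; [apply: far_grid | apply: far_grid'];
  (try rewrite /Q); lia end.

Ltac solve_far :=
  rewrite /= /Ecol /hf /cva /cvb /cvu /cls /shf; splitifs;
  first [ by apply: far_grid; (try rewrite /Q); lia
        | by apply: far_grid'; (try rewrite /Q); lia
        | by grid
        | (try rewrite /Q); exfalso; lia ].

Ltac addb := repeat match goal with
  | i : _ |- _ =>
    let t := type of (ltn_ord i) in
    assert_fails (assert t by assumption);
    pose proof (ltn_ord i)
  end.

Lemma cond4 k n : 4 <= k -> 1 <= n ->
  forall x y z : Gvert k n, Gadj x y -> Gadj x z -> y != z ->
    far (P k n) (Q n) (ce x y) (ce x z).
Proof.
move=> hk hn [[i [j|j]]|] [[i' [j'|j']]|] [[i'' [j''|j'']]|];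
rewrite /Gadj /=; norm_hyps; move=> H1 H2 H3;
addb;
solve_far.
Qed.


Ltac solve_lt :=
  rewrite /= /Ecol /hf /cva /cvb /cvu /cls /shf; splitifs;
  first [ by apply: lt_grid; (try rewrite /Q); lia | (try rewrite /Q); exfalso; lia ].

Lemma cond1 k n : 4 <= k -> 1 <= n -> forall x : Gvert k n, cv x < P k n.
Proof.
move=> hk hn [[i [j|j]]|]; addb; solve_lt.
Qed.

Lemma cond2 k n : 4 <= k -> 1 <= n -> forall x y : Gvert k n, Gadj x y ->
  ce x y < P k n /\ ce x y = ce y x.
Proof.
move=> hk hn [[i [j|j]]|] [[i' [j'|j']]|];
rewrite /Gadj /=; norm_hyps; move=> H1; addb; split; try solve_lt;
rewrite /= /Ecol /hf; splitifs; (try rewrite /Q); lia.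
Qed.

Lemma cond3 k n : 4 <= k -> 1 <= n -> forall x y : Gvert k n, Gadj x y ->
  far (P k n) (Q n) (cv x) (cv y).
Proof.
move=> hk hn [[i [j|j]]|] [[i' [j'|j']]|];
rewrite /Gadj /=; norm_hyps; move=> H1; addb; solve_far.
Qed.

Lemma cond5 k n : 4 <= k -> 1 <= n -> forall x y : Gvert k n, Gadj x y ->
  far (P k n) (Q n) (cv x) (ce x y).
Proof.
move=> hk hn [[i [j|j]]|] [[i' [j'|j']]|];
rewrite /Gadj /=; norm_hyps; move=> H1; addb; solve_far.
Qed.

Lemma colouring k n : 4 <= k -> 1 <= n ->
  has_pq_total_colouring (@Gadj k n) (P k n) (Q n).
Proof.
move=> hk hn; split.
- rewrite /Q; lia.
- rewrite /P /Q mulSn; lia.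
- exists (@cv k n), (@ce k n); split.
  + exact: cond1.
  + exact: cond2.
  + exact: cond3.
  + exact: cond4.
  + exact: cond5.
Qed.
Import Order.TTheory GRing.Theory Num.Theory.
Local Open Scope ring_scope.

Theorem theorem8 (R : realType) (k n : nat) :
  (4 <= k)%N -> (1 <= n)%N ->
  circ_total_chi R (@Gadj k n) <= k%:R + 1 + 1 / (2 * n%:R).
Proof.
move=> hk hn; rewrite /circ_total_chi.
set S := (X in inf X).
have hlb : has_lbound S.
  by exists 0 => r [p [q [_ ->]]]; rewrite divr_ge0.
have mem : S ((P k n)%:R / (Q n)%:R).
  by exists (P k n), (Q n); split => //; exact: colouring.
apply: le_trans (ge_inf hlb mem) _.
have hn0 : (n%:R : R) != 0 by rewrite pnatr_eq0 -lt0n.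
rewrite /P /Q natrD natrM natrM /= le_eqVlt; apply/orP; left; apply/eqP.
rewrite -addn1 natrD; field.
by [].
Qed.
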